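(* Fix $0<\eta<1$ and constants $A_\eta,a_\eta>0$. Let $D\ge 2$, let $0<\delta\le D$, let $\kappa\in\mathbb{Z}_{\ge0}$, and put $\xi_0=\frac{2\kappa+1}{4\delta}$. Let $\Phi\in C^\infty(\mathbb{R})$ be supported in $[-D/2,D/2]$ with $\|\Phi\|_{L^2(\mathbb{R})}=1$, and assume that for all $\xi\in\mathbb{R}$ $$ |\hat\Phi(\xi)|\le \delta^{1/2}A_\eta\Big(\exp\big(-a_\eta(\delta|\xi-\xi_0|)^{1-\eta}\big)+\exp\big(-a_\eta(\delta|\xi+\xi_0|)^{1-\eta}\big)\Big). $$ Then for every $n\in\mathbb{N}$ there exist positive constants $C_n,d_n,s_n$, depending only on $n,\eta,A_\eta,a_\eta$ (and not on $D,\delta,\kappa,\Phi$), such that for all $\xi$ with $|\xi|>\xi_0$, $$ |\hat\Phi^{(n)}(\xi)|\le C_nD^{d_n}\Big(\exp\big(-s_n(\delta|\xi-\xi_0|)^{1-\eta}\big)+\exp\big(-s_n(\delta|\xi+\xi_0|)^{1-\eta}\big)\Big). $$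
   Context: The Fourier transform is $\hat \Phi(\xi)=\int_{\mathbb{R}} \Phi(x)e^{-2\pi i x\xi}\,dx$, and $\hat\Phi^{(n)}$ denotes its $n$-th derivative. *)

(* Defs.v *)
From Stdlib Require Import Reals.
From Coquelicot Require Import Coquelicot.
Open Scope R_scope.

Definition smooth_C (f : R -> C) : Prop :=
  forall (n : nat) (x : R),
    ex_derive_n (fun t => Re (f t)) n x /\ ex_derive_n (fun t => Im (f t)) n x.

Definition expmi (theta : R) : C := (cos theta, - sin theta).

Definition fourier (f : R -> C) (xi : R) : C :=
  @RInt_gen C_R_CompleteNormedModule
    (fun x => Cmult (f x) (expmi (2 * PI * x * xi)))
    (Rbar_locally m_infty) (Rbar_locally p_infty).

Definition Derive_n_C (g : R -> C) (n : nat) (x : R) : C :=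
  (Derive_n (fun t => Re (g t)) n x, Derive_n (fun t => Im (g t)) n x).

Definition L2_norm_one (f : R -> C) : Prop :=
  @is_RInt_gen R_NormedModule (fun x => (Cmod (f x)) ^ 2)
    (Rbar_locally m_infty) (Rbar_locally p_infty) 1.

(* Real power x^y for x >= 0, with the convention 0^y = 0 (y > 0);
   Stdlib's Rpower would give 0^y = 1. *)
Definition rpow (x y : R) : R :=
  match Rle_dec x 0 with left _ => 0 | right _ => Rpower x y end.

(* Main.v *)
Require Import Defs.
From Stdlib Require Import Reals Lra Lia.
From Coquelicot Require Import Coquelicot.
Open Scope R_scope.

Fixpoint diffh (h : R) (n : nat) (f : R -> R) : R -> R :=
  match n with O => f | S m => diffh h m (fun y => f (y + h) - f y) end.

Lemma diffh_bound h (Hh : 0 < h) : forall n f xi B,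
  (forall t, xi <= t <= xi + INR n * h -> Rabs (f t) <= B) ->
  Rabs (diffh h n f xi) <= 2 ^ n * B.
Proof.
  induction n as [|n IH]; intros f xi B HB.
  - simpl. rewrite Rmult_1_l. apply HB. simpl; lra.
  - simpl. replace (2 * 2 ^ n * B) with (2 ^ n * (2 * B)) by ring.
    apply IH. intros t Ht.
    rewrite S_INR in HB.
    assert (0 <= INR n) by apply pos_INR.
    unfold Rminus.
    eapply Rle_trans. apply Rabs_triang.
    rewrite Rabs_Ropp.
    assert (Rabs (f (t + h)) <= B) by (apply HB; nra).
    assert (Rabs (f t) <= B) by (apply HB; nra).
    lra.
Qed.

Lemma cont_of_derive (f : R -> R) x l : is_derive f x l -> continuity_pt f x.
Proof.
  intro H. apply derivable_continuous_pt. exists l. apply is_derive_Reals. exact H.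
Qed.

Lemma shift_derive (f : R -> R) h t l : is_derive f (t + h) l ->
  is_derive (fun y => f (y + h)) t l.
Proof.
  intro H.
  assert (H2 : is_derive (fun y => y + h) t 1).
  { apply is_derive_Reals. replace 1 with (1 + 0) by ring.
    apply derivable_pt_lim_plus. apply derivable_pt_lim_id. apply derivable_pt_lim_const. }
  pose proof (is_derive_comp f (fun y => y + h) t l 1 H H2) as H3.
  simpl in H3. replace l with (scal 1 l). exact H3. unfold scal; simpl; unfold mult; simpl; ring.
Qed.

Lemma diffh_mvt h (Hh : 0 < h) : forall n (g : nat -> R -> R),
  (forall k t, is_derive (g k) t (g (S k) t)) ->
  forall xi, exists th, xi <= th <= xi + INR n * h /\
    diffh h n (g O) xi = h ^ n * g n th.
Proof.
  induction n as [|n IH]; intros g Hg xi.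
  - exists xi. simpl. split; [lra|ring].
  - set (g' := fun k y => g k (y + h) - g k y).
    assert (Hg' : forall k t, is_derive (g' k) t (g' (S k) t)).
    { intros k t. unfold g'.
      apply (is_derive_minus (fun y => g k (y + h)) (g k)).
      - apply shift_derive. apply Hg.
      - apply Hg. }
    destruct (IH g' Hg' xi) as [th1 [Hth1 Heq]].
    destruct (MVT_gen (g n) th1 (th1 + h) (g (S n))) as [c [Hc Hc2]].
    + intros x _. apply Hg.
    + intros x _. eapply cont_of_derive. apply Hg.
    + rewrite Rmin_left in Hc by lra. rewrite Rmax_right in Hc by lra.
      exists c. rewrite S_INR. split. 
      { assert (0 <= INR n) by apply pos_INR. nra. }
      simpl. change (diffh h n (g' O) xi = h * h ^ n * g (S n) c).
      rewrite Heq. unfold g'. rewrite Hc2. ring.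
Qed.

Lemma key_bound (g : nat -> R -> R) n xi h B M : 0 < h ->
  (forall k t, is_derive (g k) t (g (S k) t)) ->
  (forall t, xi <= t <= xi + INR n * h -> Rabs (g O t) <= B) ->
  (forall t, Rabs (g (S n) t) <= M) ->
  Rabs (g n xi) <= 2 ^ n * B / h ^ n + INR n * h * M.
Proof.
  intros Hh Hg HB HM.
  destruct (diffh_mvt h Hh n g Hg xi) as [th [Hth Heq]].
  pose proof (diffh_bound h Hh n (g O) xi B HB) as Hd.
  rewrite Heq in Hd.
  assert (Hhn : 0 < h ^ n) by (apply pow_lt; lra).
  assert (H1 : Rabs (g n th) <= 2 ^ n * B / h ^ n).
  { rewrite Rabs_mult, (Rabs_right (h ^ n)) in Hd by lra.
    apply (Rmult_le_reg_l (h ^ n)); auto. unfold Rdiv.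
    replace (h ^ n * (2 ^ n * B * / h ^ n)) with (2 ^ n * B) by (field; lra). exact Hd. }
  assert (H2 : Rabs (g n xi - g n th) <= INR n * h * M).
  { destruct (Req_dec th xi) as [E|E].
    - subst. rewrite Rminus_diag, Rabs_R0. 
      assert (0 <= M) by (eapply Rle_trans; [apply Rabs_pos|apply (HM 0)]).
      assert (0 <= INR n) by apply pos_INR. nra.
    - destruct (MVT_gen (g n) xi th (g (S n))) as [c [Hc Hc2]].
      + intros x _. apply Hg.
      + intros x _. eapply cont_of_derive. apply Hg.
      + replace (g n xi - g n th) with (- (g n th - g n xi)) by ring.
        rewrite Rabs_Ropp, Hc2, Rabs_mult.
        assert (Rabs (th - xi) <= INR n * h) by (rewrite Rabs_right; lra).
        pose proof (HM c). pose proof (Rabs_pos (g (S n) c)). pose proof (Rabs_pos (th - xi)).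
        nra. }
  replace (g n xi) with (g n th + (g n xi - g n th)) by ring.
  eapply Rle_trans. apply Rabs_triang. lra.
Qed.

Lemma Rpower_pos x q : 0 < Rpower x q.
Proof. unfold Rpower. apply exp_pos. Qed.

Lemma Rpower_ge_self t q : 0 < t <= 1 -> 0 < q <= 1 -> t <= Rpower t q.
Proof.
  intros Ht Hq. unfold Rpower.
  rewrite <- (exp_ln t) at 1 by lra.
  assert (ln t <= 0). { rewrite <- ln_1. apply ln_le; lra. }
  destruct (Req_dec (ln t) (q * ln t)) as [E|E]. rewrite <- E; lra.
  left. apply exp_increasing. nra.
Qed.

Lemma Rpower_subadd x y q : 0 < x -> 0 < y -> 0 < q <= 1 ->
  Rpower (x + y) q <= Rpower x q + Rpower y q.
Proof.
  intros Hx Hy Hq. set (s := x + y).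
  assert (Hs : 0 < s) by (unfold s; lra).
  assert (Ex : Rpower x q = Rpower s q * Rpower (x / s) q).
  { rewrite Rpower_mult_distr; auto. f_equal. unfold s; field; lra.
    apply Rdiv_lt_0_compat; lra. }
  assert (Ey : Rpower y q = Rpower s q * Rpower (y / s) q).
  { rewrite Rpower_mult_distr; auto. f_equal. unfold s; field; lra.
    apply Rdiv_lt_0_compat; lra. }
  assert (H1 : x / s <= Rpower (x / s) q).
  { apply Rpower_ge_self; auto. split. apply Rdiv_lt_0_compat; lra.
    unfold s. apply Rmult_le_reg_r with (x + y). lra. field_simplify; lra. }
  assert (H2 : y / s <= Rpower (y / s) q).
  { apply Rpower_ge_self; auto. split. apply Rdiv_lt_0_compat; lra.
    unfold s. apply Rmult_le_reg_r with (x + y). lra. field_simplify; lra. }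
  rewrite Ex, Ey. pose proof (Rpower_pos s q).
  assert (x / s + y / s = 1) by (unfold s; field; lra).
  nra.
Qed.

Lemma rpow_nonneg x p : 0 <= rpow x p.
Proof. unfold rpow. destruct (Rle_dec x 0). lra. left; apply Rpower_pos. Qed.

Lemma rpow_mono x y p : 0 <= p -> 0 <= x <= y -> rpow x p <= rpow y p.
Proof.
  intros Hp Hxy. unfold rpow.
  destruct (Rle_dec x 0); destruct (Rle_dec y 0).
  - lra.
  - left; apply Rpower_pos.
  - lra.
  - apply Rle_Rpower_l; lra.
Qed.

Lemma rpow_le1 x p : 0 <= p -> x <= 1 -> rpow x p <= 1.
Proof.
  intros Hp Hx. unfold rpow. destruct (Rle_dec x 0). lra.
  unfold Rpower. rewrite <- exp_0. 
  assert (ln x <= 0). { rewrite <- ln_1. apply ln_le; lra. }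
  destruct (Req_dec (p * ln x) 0) as [E|E]. rewrite E; lra.
  left; apply exp_increasing. nra.
Qed.

Lemma rpow_subadd x y p : 0 < p <= 1 -> 0 <= x -> 0 <= y ->
  rpow (x + y) p <= rpow x p + rpow y p.
Proof.
  intros Hp Hx Hy. 
  destruct (Req_dec x 0) as [E|E].
  { subst. rewrite Rplus_0_l. pose proof (rpow_nonneg 0 p). lra. }
  destruct (Req_dec y 0) as [E2|E2].
  { subst. rewrite Rplus_0_r. pose proof (rpow_nonneg 0 p). lra. }
  unfold rpow. destruct (Rle_dec (x+y) 0); destruct (Rle_dec x 0); destruct (Rle_dec y 0);
   try lra.
  apply Rpower_subadd; lra.
Qed.

Lemma cont2_to_1 f x y : continuity_2d_pt f x y -> continuity_pt (fun v => f x v) y.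
Proof.
  intros H. apply continuity_pt_filterlim. intros P [eps HP].
  destruct (H eps) as [d Hd]. exists d. intros v Hv. apply HP.
  apply Hd. rewrite Rminus_diag, Rabs_R0; apply cond_pos. exact Hv.
Qed.

Lemma cont_ex f x : ex_derive f x -> continuity_pt f x.
Proof. intros [l Hl]. apply derivable_continuous_pt. exists l. apply is_derive_Reals. exact Hl. Qed.

Definition integrand (U V : R -> R) (phi : R) (k : nat) (u v : R) : R :=
  (2*PI*v)^k * (U v * cos (2*PI*v*u + phi) + V v * sin (2*PI*v*u + phi)).

Lemma integrand_cont U V phi k x t :
  (forall y, continuity_pt U y) -> (forall y, continuity_pt V y) ->
  continuity_2d_pt (integrand U V phi k) x t.
Proof.
  intros HU HV. unfold integrand.
  assert (Harg : continuity_2d_pt (fun u v => 2*PI*v*u + phi) x t).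
  { apply continuity_2d_pt_plus. apply continuity_2d_pt_mult.
    apply continuity_2d_pt_mult. apply continuity_2d_pt_const. apply continuity_2d_pt_id2.
    apply continuity_2d_pt_id1. apply continuity_2d_pt_const. }
  apply continuity_2d_pt_mult.
  - apply (continuity_1d_2d_pt_comp (fun v => (2*PI*v)^k) (fun u v => v)).
    apply cont_ex. auto_derive. trivial. apply continuity_2d_pt_id2.
  - apply continuity_2d_pt_plus; apply continuity_2d_pt_mult.
    + apply (continuity_1d_2d_pt_comp U (fun u v => v)). apply HU. apply continuity_2d_pt_id2.
    + apply (continuity_1d_2d_pt_comp cos (fun u v => 2*PI*v*u + phi)).
      apply cont_ex. auto_derive. trivial. exact Harg.
    + apply (continuity_1d_2d_pt_comp V (fun u v => v)). apply HV. apply continuity_2d_pt_id2.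
    + apply (continuity_1d_2d_pt_comp sin (fun u v => 2*PI*v*u + phi)).
      apply cont_ex. auto_derive. trivial. exact Harg.
Qed.

Lemma integrand_derive U V phi k u t :
  is_derive (fun z => integrand U V phi k z t) u (integrand U V (phi + PI/2) (S k) u t).
Proof.
  unfold integrand. auto_derive. trivial.
  repeat rewrite ?cos_plus, ?sin_plus. rewrite cos_PI2, sin_PI2.
  simpl. ring.
Qed.

Definition Gk (U V : R -> R) (L phi : R) (k : nat) (xi : R) : R :=
  RInt (fun x => integrand U V phi k xi x) (-L) L.

Lemma integrand_exRInt U V phi k u a b :
  (forall y, continuity_pt U y) -> (forall y, continuity_pt V y) ->
  ex_RInt (fun t => integrand U V phi k u t) a b.
Proof.
  intros HU HV. apply (ex_RInt_continuous (V:=R_CompleteNormedModule)). intros z _.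
  apply continuity_pt_filterlim. apply (cont2_to_1 (integrand U V phi k)).
  apply integrand_cont; auto.
Qed.

Lemma Gk_derive U V L phi k xi :
  (forall y, continuity_pt U y) -> (forall y, continuity_pt V y) ->
  is_derive (Gk U V L phi k) xi (Gk U V L (phi + PI/2) (S k) xi).
Proof.
  intros HU HV. unfold Gk.
  assert (E : RInt (fun x => integrand U V (phi + PI / 2) (S k) xi x) (- L) L =
              RInt (fun t => Derive (fun u => integrand U V phi k u t) xi) (- L) L).
  { apply RInt_ext. intros x _. symmetry. apply is_derive_unique. apply integrand_derive. }
  rewrite E.
  apply (is_derive_RInt_param (fun u t => integrand U V phi k u t) (-L) L xi).
  - exists (mkposreal 1 Rlt_0_1). intros y _ t _. eexists. apply integrand_derive.
  - intros t _. apply (continuity_2d_pt_ext (integrand U V (phi + PI/2) (S k))).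
    intros u v. symmetry. apply is_derive_unique. apply integrand_derive.
    apply integrand_cont; auto.
  - exists (mkposreal 1 Rlt_0_1). intros y _. apply integrand_exRInt; auto.
Qed.

Lemma pointwise_bd u v cs sn : -1 <= cs <= 1 -> -1 <= sn <= 1 ->
  Rabs (u * cs + v * sn) <= 1 + (u ^ 2 + v ^ 2).
Proof.
  intros Hc Hs. eapply Rle_trans. apply Rabs_triang.
  rewrite !Rabs_mult.
  assert (Rabs cs <= 1) by (apply Rabs_le; lra).
  assert (Rabs sn <= 1) by (apply Rabs_le; lra).
  pose proof (Rabs_pos u). pose proof (Rabs_pos v).
  pose proof (Rabs_pos cs). pose proof (Rabs_pos sn).
  assert (Rabs u * Rabs u = u * u) by (rewrite <- Rabs_mult; apply Rabs_right; nra).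
  assert (Rabs v * Rabs v = v * v) by (rewrite <- Rabs_mult; apply Rabs_right; nra).
  assert (Rabs u * Rabs cs <= Rabs u) by nra.
  assert (Rabs v * Rabs sn <= Rabs v) by nra.
  pose proof (pow2_ge_0 (Rabs u - 1)). pose proof (pow2_ge_0 (Rabs v - 1)).
  simpl. nra.
Qed.

Lemma Gk_bound U V L phi k xi : 0 <= L ->
  (forall y, continuity_pt U y) -> (forall y, continuity_pt V y) ->
  is_RInt (fun x => U x ^ 2 + V x ^ 2) (-L) L 1 ->
  Rabs (Gk U V L phi k xi) <= (2*PI*L)^k * (2*L + 1).
Proof.
  intros HL HU HV HI. unfold Gk.
  set (c := (2*PI*L)^k).
  assert (Hc : 0 <= c) by (unfold c; apply pow_le; pose proof PI_RGT_0; nra).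
  assert (HJ : is_RInt (fun x => c * (1 + (U x ^ 2 + V x ^ 2))) (-L) L (c * (2*L + 1))).
  { pose proof (is_RInt_plus _ _ (-L) L _ _ (is_RInt_const (V:=R_NormedModule) (-L) L 1) HI) as H1.
    pose proof (is_RInt_scal _ (-L) L c _ H1) as H2.
    replace (c * (2 * L + 1)) with (scal c (plus (scal (L - - L) 1) 1)).
    exact H2. unfold scal, plus; simpl; unfold mult; simpl. change (c * ((L - - L) * 1 + 1) = c * (2 * L + 1)). ring. }
  eapply Rle_trans. apply abs_RInt_le. lra. apply integrand_exRInt; auto.
  rewrite <- (is_RInt_unique _ _ _ _ HJ).
  apply RInt_le. lra.
  - apply ex_RInt_norm. apply integrand_exRInt; auto.
  - eexists; exact HJ.
  - intros x Hx. unfold integrand. rewrite Rabs_mult.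
    apply Rmult_le_compat. apply Rabs_pos. apply Rabs_pos.
    + rewrite <- RPow_abs. unfold c. apply pow_incr. split. apply Rabs_pos.
      rewrite !Rabs_mult. rewrite (Rabs_right 2) by lra. rewrite (Rabs_right PI) by (pose proof PI_RGT_0; lra).
      pose proof PI_RGT_0. assert (Rabs x <= L) by (apply Rabs_le; lra). nra.
    + apply pointwise_bd. apply COS_bound. apply SIN_bound.
Qed.

Lemma compact_gen {V : NormedModule R_AbsRing} (f : R -> V) l L :
  (forall a b, a < -L -> L < b -> is_RInt f a b l) ->
  is_RInt_gen f (Rbar_locally m_infty) (Rbar_locally p_infty) l.
Proof.
  intros H P HP. unfold filtermapi.
  apply (Filter_prod _ _ _ (fun a => a < -L) (fun b => L < b)).
  - exists (-L). auto.
  - exists L. auto.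
  - intros x y Hx Hy. exists l. split. apply H; auto. apply locally_singleton. exact HP.
Qed.

Lemma is_RInt_extend (r : R -> R) L a b : 0 <= L -> a < -L -> L < b ->
  (forall y, continuity_pt r y) -> (forall x, L < Rabs x -> r x = 0) ->
  is_RInt r a b (RInt r (-L) L).
Proof.
  intros HL Ha Hb Hc Hs.
  assert (Hex : forall u v, ex_RInt r u v).
  { intros u v. apply (ex_RInt_continuous (V:=R_CompleteNormedModule)). intros z _.
    apply continuity_pt_filterlim. apply Hc. }
  assert (E : RInt r a b = RInt r (-L) L).
  { rewrite <- (RInt_Chasles r a (-L) b) by auto.
    rewrite <- (RInt_Chasles r (-L) L b) by auto.
    assert (E1 : RInt r a (-L) = 0).
    { rewrite (RInt_ext r (fun _ => 0)). rewrite RInt_const. unfold scal; simpl; unfold mult; simpl; ring.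
      intros x Hx. rewrite Rmin_left in Hx by lra. rewrite Rmax_right in Hx by lra.
      apply Hs. rewrite Rabs_left by lra. lra. }
    assert (E2 : RInt r L b = 0).
    { rewrite (RInt_ext r (fun _ => 0)). rewrite RInt_const. unfold scal; simpl; unfold mult; simpl; ring.
      intros x Hx. rewrite Rmin_left in Hx by lra. rewrite Rmax_right in Hx by lra.
      apply Hs. rewrite Rabs_right by lra. lra. }
    rewrite E1, E2. unfold plus; simpl. ring. }
  rewrite <- E. apply (RInt_correct (V:=R_CompleteNormedModule)). auto.
Qed.

Lemma fourier_eq (Phi : R -> C) L xi : 0 <= L ->
  (forall y, continuity_pt (fun t => fst (Phi t)) y) ->
  (forall y, continuity_pt (fun t => snd (Phi t)) y) ->
  (forall x, L < Rabs x -> Phi x = RtoC 0) ->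
  fourier Phi xi = (Gk (fun t => fst (Phi t)) (fun t => snd (Phi t)) L 0 0 xi,
                    Gk (fun t => fst (Phi t)) (fun t => snd (Phi t)) L (PI/2) 0 xi).
Proof.
  intros HL HU HV Hs. unfold fourier. apply (is_RInt_gen_unique (V:=C_R_CompleteNormedModule)).
  apply compact_gen with L. intros a b Ha Hb.
  apply is_RInt_fct_extend_pair.
  - apply is_RInt_ext with (f := fun x => integrand (fun t => fst (Phi t)) (fun t => snd (Phi t)) 0 0 xi x).
    + intros x _. unfold integrand, Cmult, expmi. simpl. rewrite Rplus_0_r. ring.
    + unfold Gk. apply is_RInt_extend; auto.
      * intros y. apply (cont2_to_1 (integrand _ _ 0 0)). apply integrand_cont; auto.
      * intros x Hx. unfold integrand. rewrite (Hs x Hx). simpl. ring.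
  - apply is_RInt_ext with (f := fun x => integrand (fun t => fst (Phi t)) (fun t => snd (Phi t)) (PI/2) 0 xi x).
    + intros x _. unfold integrand, Cmult, expmi. simpl.
      rewrite cos_plus, sin_plus, cos_PI2, sin_PI2. ring.
    + unfold Gk. apply is_RInt_extend; auto.
      * intros y. apply (cont2_to_1 (integrand _ _ (PI/2) 0)). apply integrand_cont; auto.
      * intros x Hx. unfold integrand. rewrite (Hs x Hx). simpl. ring.
Qed.

Lemma L2_local (Phi : R -> C) L : 0 <= L ->
  (forall y, continuity_pt (fun t => fst (Phi t)) y) ->
  (forall y, continuity_pt (fun t => snd (Phi t)) y) ->
  (forall x, L < Rabs x -> Phi x = RtoC 0) ->
  L2_norm_one Phi ->
  is_RInt (fun x => fst (Phi x) ^ 2 + snd (Phi x) ^ 2) (-L) L 1.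
Proof.
  intros HL HU HV Hs H2.
  set (r := fun x => fst (Phi x) ^ 2 + snd (Phi x) ^ 2).
  assert (Hr : forall x, Cmod (Phi x) ^ 2 = r x).
  { intros x. unfold Cmod, r. apply pow2_sqrt. pose proof (pow2_ge_0 (fst (Phi x))).
    pose proof (pow2_ge_0 (snd (Phi x))). lra. }
  assert (Hc : forall y, continuity_pt r y).
  { intros y. unfold r. apply (continuity_pt_plus (fun x => fst (Phi x) ^ 2) (fun x => snd (Phi x) ^ 2)).
    - apply (continuity_pt_comp (fun x => fst (Phi x)) (fun z => z ^ 2)). auto.
      apply cont_ex. auto_derive. trivial.
    - apply (continuity_pt_comp (fun x => snd (Phi x)) (fun z => z ^ 2)). auto.
      apply cont_ex. auto_derive. trivial. }
  assert (Hg : is_RInt_gen r (Rbar_locally m_infty) (Rbar_locally p_infty) (RInt r (-L) L)).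
  { apply compact_gen with L. intros a b Ha Hb. apply is_RInt_extend; auto.
    intros x Hx. unfold r. rewrite (Hs x Hx). simpl. ring. }
  assert (Hg2 : is_RInt_gen r (Rbar_locally m_infty) (Rbar_locally p_infty) 1).
  { unfold L2_norm_one in H2. eapply is_RInt_gen_ext; [| exact H2].
    apply filter_forall. intros ab x _. apply Hr. }
  assert (E : RInt r (-L) L = 1).
  { rewrite <- (is_RInt_gen_unique (V:=R_CompleteNormedModule) _ _ Hg).
    apply (is_RInt_gen_unique (V:=R_CompleteNormedModule) _ _ Hg2). }
  rewrite <- E. apply (RInt_correct (V:=R_CompleteNormedModule)).
  apply (ex_RInt_continuous (V:=R_CompleteNormedModule)). intros z _.
  apply continuity_pt_filterlim. apply Hc.
Qed.

Lemma comp_bound U V L phi0 n xi h B :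
  0 <= L -> 0 < h ->
  (forall y, continuity_pt U y) -> (forall y, continuity_pt V y) ->
  is_RInt (fun x => U x ^ 2 + V x ^ 2) (-L) L 1 ->
  (forall t, xi <= t <= xi + INR n * h -> Rabs (Gk U V L phi0 0 t) <= B) ->
  Rabs (Derive_n (Gk U V L phi0 0) n xi) <=
    2 ^ n * B / h ^ n + INR n * h * ((2*PI*L)^(S n) * (2*L + 1)).
Proof.
  intros HL Hh HU HV HI HB.
  set (g := fun k t => Gk U V L (phi0 + INR k * (PI/2)) k t).
  assert (Hg : forall k t, is_derive (g k) t (g (S k) t)).
  { intros k t. unfold g.
    replace (phi0 + INR (S k) * (PI / 2)) with (phi0 + INR k * (PI/2) + PI/2) by (rewrite S_INR; ring).
    apply Gk_derive; auto. }
  assert (Hg0 : forall t, g O t = Gk U V L phi0 0 t).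
  { intros t. unfold g. simpl. rewrite Rmult_0_l, Rplus_0_r. reflexivity. }
  assert (HD : forall m t, Derive_n (Gk U V L phi0 0) m t = g m t).
  { induction m as [|m IH]; intros t.
    - simpl. rewrite Hg0. reflexivity.
    - simpl. rewrite (Derive_ext _ (g m)) by apply IH. apply is_derive_unique. apply Hg. }
  rewrite HD.
  apply (key_bound g n xi h B _ Hh Hg).
  - intros t Ht. rewrite Hg0. apply HB; exact Ht.
  - intros t. unfold g. apply Gk_bound; assumption.
Qed.

Lemma shift_decay a p delta c xi t : 0 < a -> 0 < p <= 1 -> 0 < delta ->
  delta * Rabs (t - xi) <= 1 ->
  exp (- a * rpow (delta * Rabs (t - c)) p) <= exp a * exp (- a * rpow (delta * Rabs (xi - c)) p).
Proof.
  intros Ha Hp Hd Ht.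
  assert (H1 : rpow (delta * Rabs (xi - c)) p <= rpow (delta * Rabs (t - c)) p + 1).
  { eapply Rle_trans. apply rpow_mono. lra.
    split. apply Rmult_le_pos. lra. apply Rabs_pos.
    instantiate (1 := delta * Rabs (t - c) + delta * Rabs (t - xi)).
    rewrite <- Rmult_plus_distr_l. apply Rmult_le_compat_l. lra.
    replace (xi - c) with ((t - c) + - (t - xi)) by ring.
    eapply Rle_trans. apply Rabs_triang. rewrite Rabs_Ropp. lra.
    eapply Rle_trans. apply rpow_subadd; auto.
    apply Rmult_le_pos. lra. apply Rabs_pos. apply Rmult_le_pos. lra. apply Rabs_pos.
    pose proof (rpow_le1 (delta * Rabs (t - xi)) p). lra. }
  rewrite <- exp_plus. destruct (Req_dec (- a * rpow (delta * Rabs (t - c)) p) (a + - a * rpow (delta * Rabs (xi - c)) p)) as [E|E].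
  rewrite E; lra. left. apply exp_increasing.
  assert (a * rpow (delta * Rabs (xi - c)) p <= a * (rpow (delta * Rabs (t - c)) p + 1)) by (apply Rmult_le_compat_l; lra).
  lra.
Qed.

Lemma E_pow u v q : 0 < q <= 1 -> Rpower (exp u + exp v) q <= exp (q * u) + exp (q * v).
Proof.
  intros Hq. eapply Rle_trans. apply Rpower_subadd; auto; apply exp_pos.
  unfold Rpower. rewrite !ln_exp. lra.
Qed.

Lemma Cmod_le2 (z : C) b : Rabs (fst z) <= b -> Rabs (snd z) <= b -> Cmod z <= 2 * b.
Proof.
  intros H1 H2. eapply Rle_trans. apply Cmod_2Rmax.
  assert (Hm : Rmax (Rabs (fst z)) (Rabs (snd z)) <= b) by (apply Rmax_lub; auto).
  assert (Hs : sqrt 2 <= 2).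
  { rewrite <- (sqrt_square 2) at 2 by lra. apply sqrt_le_1_alt. lra. }
  assert (0 <= Rmax (Rabs (fst z)) (Rabs (snd z))) by (eapply Rle_trans; [apply Rabs_pos|apply Rmax_l]).
  pose proof (sqrt_pos 2). apply Rmult_le_compat; lra.
Qed.

Lemma T_bound (n : nat) (A a D delta P : R) : 0 < A -> 2 <= D -> 0 < delta <= D -> 0 < P ->
  2 ^ n * (sqrt delta * A * exp a * P ^ (S n)) / (P / (2 * (INR n + 1) * D)) ^ n
  + INR n * (P / (2 * (INR n + 1) * D)) * ((2 * PI * (D / 2)) ^ (S n) * (2 * (D / 2) + 1))
  <= (2 ^ n * A * exp a * (2 * (INR n + 1)) ^ n + 4 ^ (S n)) * D ^ (S n) * P.
Proof.
  intros HA HD Hdel HP.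
  set (N1 := INR n + 1).
  assert (Hn0 : 0 <= INR n) by apply pos_INR.
  assert (HN1 : 1 <= N1) by (unfold N1; lra).
  set (K1 := 2 ^ n * A * exp a * (2 * N1) ^ n).
  assert (HK1 : 0 < K1).
  { unfold K1. apply Rmult_lt_0_compat. apply Rmult_lt_0_compat. apply Rmult_lt_0_compat.
    apply pow_lt; lra. auto. apply exp_pos. apply pow_lt; lra. }
  assert (HPn : 0 < P ^ n) by (apply pow_lt; lra).
  assert (HDn : 0 < D ^ n) by (apply pow_lt; lra).
  assert (HNn : 0 < (2 * N1) ^ n) by (apply pow_lt; lra).
  assert (Ehn : (P / (2 * N1 * D)) ^ n = P ^ n / ((2 * N1) ^ n * D ^ n)).
  { unfold Rdiv. rewrite Rpow_mult_distr, pow_inv, Rpow_mult_distr. reflexivity. }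
  assert (E1 : 2 ^ n * (sqrt delta * A * exp a * P ^ (S n)) / (P / (2 * N1 * D)) ^ n
               = K1 * sqrt delta * D ^ n * P).
  { rewrite Ehn. replace (P ^ (S n)) with (P * P ^ n) by reflexivity. unfold K1.
    field. split; lra. }
  assert (Hs : sqrt delta <= D).
  { apply Rle_trans with (sqrt D). apply sqrt_le_1_alt; lra.
    rewrite <- (sqrt_square D) at 2 by lra. apply sqrt_le_1_alt. nra. }
  assert (B1 : K1 * sqrt delta * D ^ n * P <= K1 * D ^ (S n) * P).
  { replace (D ^ (S n)) with (D * D ^ n) by reflexivity.
    assert (0 < K1 * D ^ n * P) by (apply Rmult_lt_0_compat; [apply Rmult_lt_0_compat|]; lra).
    nra. }
  assert (E2 : INR n * (P / (2 * N1 * D)) * ((2 * PI * (D / 2)) ^ (S n) * (2 * (D / 2) + 1))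
              = (INR n * (D + 1) / (2 * N1 * D)) * (PI ^ (S n) * D ^ (S n) * P)).
  { replace (2 * PI * (D / 2)) with (PI * D) by field. rewrite Rpow_mult_distr.
    field. split; lra. }
  assert (Hbr : INR n * (D + 1) / (2 * N1 * D) <= 1).
  { apply Rmult_le_reg_r with (2 * N1 * D). nra. unfold Rdiv. rewrite Rmult_assoc, Rinv_l by nra.
    unfold N1. nra. }
  assert (Hbr0 : 0 <= INR n * (D + 1) / (2 * N1 * D)).
  { apply Rmult_le_pos. nra. left. apply Rinv_0_lt_compat. nra. }
  assert (Hpi : PI ^ (S n) <= 4 ^ (S n)).
  { apply pow_incr. pose proof PI_RGT_0. pose proof PI_4. lra. }
  assert (HDs : 0 < D ^ (S n)) by (apply pow_lt; lra).
  assert (HPi0 : 0 < PI ^ (S n)) by (apply pow_lt; apply PI_RGT_0).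
  assert (B2 : (INR n * (D + 1) / (2 * N1 * D)) * (PI ^ (S n) * D ^ (S n) * P) <= 4 ^ (S n) * D ^ (S n) * P).
  { apply Rle_trans with (1 * (PI ^ (S n) * D ^ (S n) * P)).
    apply Rmult_le_compat_r. left. apply Rmult_lt_0_compat; [apply Rmult_lt_0_compat|]; lra. exact Hbr.
    rewrite Rmult_1_l. rewrite !Rmult_assoc. apply Rmult_le_compat_r. left; apply Rmult_lt_0_compat; lra. exact Hpi. }
  rewrite E1, E2. fold K1. lra.
Qed.

Lemma exp_le1 x : x <= 0 -> exp x <= 1.
Proof. intros H. rewrite <- exp_0. destruct (Req_dec x 0). subst; lra. left; apply exp_increasing; lra. Qed.

Theorem corollary1 :
  forall (eta A a : R), 0 < eta < 1 -> 0 < A -> 0 < a ->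
  forall n : nat,
  exists Cn dn sn : R, 0 < Cn /\ 0 < dn /\ 0 < sn /\
  forall (D delta : R) (kappa : nat) (Phi : R -> C),
    2 <= D -> 0 < delta <= D ->
    smooth_C Phi ->
    (forall x, D / 2 < Rabs x -> Phi x = RtoC 0) ->
    L2_norm_one Phi ->
    (let xi0 := (2 * INR kappa + 1) / (4 * delta) in
     (forall xi : R,
        Cmod (fourier Phi xi) <=
        sqrt delta * A *
          (exp (- a * rpow (delta * Rabs (xi - xi0)) (1 - eta))
           + exp (- a * rpow (delta * Rabs (xi + xi0)) (1 - eta)))) ->
     forall xi : R, xi0 < Rabs xi ->
        Cmod (Derive_n_C (fourier Phi) n xi) <=
        Cn * Rpower D dn *
          (exp (- sn * rpow (delta * Rabs (xi - xi0)) (1 - eta))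
           + exp (- sn * rpow (delta * Rabs (xi + xi0)) (1 - eta)))).
Proof.
  intros eta A a Heta HA Ha n.
  set (N1 := INR n + 1).
  assert (Hn0 : 0 <= INR n) by apply pos_INR.
  assert (HN1 : 1 <= N1) by (unfold N1; lra).
  set (K1 := 2^n * A * exp a * (2*N1)^n).
  assert (HK1 : 0 < K1).
  { unfold K1. apply Rmult_lt_0_compat. apply Rmult_lt_0_compat. apply Rmult_lt_0_compat.
    apply pow_lt; lra. auto. apply exp_pos. apply pow_lt; lra. }
  assert (H4 : 0 < 4 ^ (S n)) by (apply pow_lt; lra).
  exists (2 * (K1 + 4 ^ (S n))), N1, (a / N1).
  split; [lra|]. split; [lra|]. split; [apply Rdiv_lt_0_compat; lra|].
  intros D delta kappa Phi HD Hdel Hsm Hsupp HL2 xi0 Hfour xi Hxi.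
  set (U := fun t => fst (Phi t)). set (V := fun t => snd (Phi t)). set (L := D / 2).
  assert (HL : 0 <= L) by (unfold L; lra).
  assert (HU : forall y, continuity_pt U y).
  { intro y. destruct (Hsm 1%nat y) as [H1 _]. apply cont_ex. exact H1. }
  assert (HV : forall y, continuity_pt V y).
  { intro y. destruct (Hsm 1%nat y) as [_ H1]. apply cont_ex. exact H1. }
  assert (HI : is_RInt (fun x => U x ^ 2 + V x ^ 2) (-L) L 1).
  { apply (L2_local Phi L HL HU HV Hsupp HL2). }
  assert (Hfe : forall t, fourier Phi t = (Gk U V L 0 0 t, Gk U V L (PI/2) 0 t)).
  { intro t. apply fourier_eq; auto. }
  set (p := 1 - eta).
  assert (Hp : 0 < p <= 1) by (unfold p; lra).
  set (E0 := exp (- a * rpow (delta * Rabs (xi - xi0)) p) + exp (- a * rpow (delta * Rabs (xi + xi0)) p)).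
  assert (HE0 : 0 < E0) by (unfold E0; pose proof (exp_pos (- a * rpow (delta * Rabs (xi - xi0)) p)); pose proof (exp_pos (- a * rpow (delta * Rabs (xi + xi0)) p)); lra).
  set (q := / N1).
  assert (Hq : 0 < q <= 1).
  { unfold q. split. apply Rinv_0_lt_compat; lra. rewrite <- Rinv_1. apply Rinv_le_contravar; lra. }
  set (P := Rpower E0 q).
  assert (HPpos : 0 < P) by apply Rpower_pos.
  assert (HP1 : P <= exp (- (a / N1) * rpow (delta * Rabs (xi - xi0)) p) + exp (- (a / N1) * rpow (delta * Rabs (xi + xi0)) p)).
  { unfold P, E0. eapply Rle_trans. apply E_pow; auto.
    unfold q. right. f_equal; f_equal; field; lra. }
  assert (HP2 : P <= 2).
  { pose proof (rpow_nonneg (delta * Rabs (xi - xi0)) p). pose proof (rpow_nonneg (delta * Rabs (xi + xi0)) p).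
    assert (0 < a / N1) by (apply Rdiv_lt_0_compat; lra).
    assert (exp (- (a / N1) * rpow (delta * Rabs (xi - xi0)) p) <= 1) by (apply exp_le1; nra).
    assert (exp (- (a / N1) * rpow (delta * Rabs (xi + xi0)) p) <= 1) by (apply exp_le1; nra).
    lra. }
  assert (HEP : E0 = P ^ (S n)).
  { rewrite <- Rpower_pow by auto. unfold P. rewrite Rpower_mult. rewrite S_INR.
    fold N1. unfold q. rewrite Rinv_l by lra. rewrite Rpower_1 by auto. reflexivity. }
  set (h := P / (2 * N1 * D)).
  assert (Hh : 0 < h) by (unfold h; apply Rdiv_lt_0_compat; nra).
  set (B := sqrt delta * A * exp a * E0).
  assert (Hdh : forall t, xi <= t <= xi + INR n * h -> delta * Rabs (t - xi) <= 1).
  { intros t Ht. rewrite Rabs_right by lra.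
    assert (Hdh1 : D * h = P / (2 * N1)) by (unfold h; field; lra).
    assert (delta * (t - xi) <= D * (INR n * h)).
    { apply Rmult_le_compat; lra. }
    assert (D * (INR n * h) = INR n * P / (2 * N1)) by (rewrite <- Rmult_assoc, (Rmult_comm D), Rmult_assoc, Hdh1; field; lra).
    assert (INR n * P <= INR n * 2) by (apply Rmult_le_compat_l; lra).
    assert (INR n * P / (2 * N1) <= 1).
    { apply Rmult_le_reg_r with (2 * N1). lra. unfold Rdiv. rewrite Rmult_assoc, Rinv_l by lra. unfold N1 in *. lra. }
    lra. }
  assert (HEt : forall t, xi <= t <= xi + INR n * h ->
     exp (- a * rpow (delta * Rabs (t - xi0)) p) + exp (- a * rpow (delta * Rabs (t + xi0)) p) <= exp a * E0).
  { intros t Ht. pose proof (Hdh t Ht) as Hd.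
    pose proof (shift_decay a p delta xi0 xi t Ha Hp (proj1 Hdel) Hd) as H1.
    pose proof (shift_decay a p delta (- xi0) xi t Ha Hp (proj1 Hdel) Hd) as H2.
    replace (t - - xi0) with (t + xi0) in H2 by ring. replace (xi - - xi0) with (xi + xi0) in H2 by ring.
    unfold E0. lra. }
  assert (HFt : forall t, xi <= t <= xi + INR n * h -> Cmod (fourier Phi t) <= B).
  { intros t Ht. eapply Rle_trans. apply Hfour.
    replace B with (sqrt delta * A * (exp a * E0)) by (unfold B; ring).
    apply Rmult_le_compat_l. apply Rmult_le_pos. apply sqrt_pos. lra.
    apply HEt; auto. }
  set (M := (2 * PI * L) ^ (S n) * (2 * L + 1)).
  set (T := 2 ^ n * B / h ^ n + INR n * h * M).
  assert (HT : T <= (K1 + 4 ^ (S n)) * D ^ (S n) * P).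
  { unfold T, M, B, h, L. rewrite HEP. unfold K1, N1. apply T_bound; auto. }
  assert (HC1 : Rabs (Derive_n (fun t => Re (fourier Phi t)) n xi) <= T).
  { rewrite (Derive_n_ext _ (Gk U V L 0 0)) by (intro t; rewrite Hfe; reflexivity).
    apply comp_bound; auto. intros t Ht. 
    eapply Rle_trans; [| apply (HFt t Ht)]. rewrite Hfe. apply (re_le_Cmod (_, _)). }
  assert (HC2 : Rabs (Derive_n (fun t => Im (fourier Phi t)) n xi) <= T).
  { rewrite (Derive_n_ext _ (Gk U V L (PI/2) 0)) by (intro t; rewrite Hfe; reflexivity).
    apply comp_bound; auto. intros t Ht. 
    eapply Rle_trans; [| apply (HFt t Ht)]. rewrite Hfe.
    eapply Rle_trans; [| apply (Rmax_Cmod (_, _))]. apply Rmax_r. }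
  unfold Derive_n_C. eapply Rle_trans. apply Cmod_le2. exact HC1. exact HC2.
  replace (Rpower D N1) with (D ^ (S n)) by (rewrite <- Rpower_pow; [rewrite S_INR; reflexivity | lra]).
  apply Rle_trans with (2 * (K1 + 4 ^ S n) * D ^ S n * P); [lra|].
  apply Rmult_le_compat_l; [|exact HP1].
  assert (0 < D ^ S n) by (apply pow_lt; lra). nra.
Qed.
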